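(* Let $G$ be a finite nilpotent group of nilpotency class $2$ and $w\in F_k$. The following are equivalent: (i) the word map $w:G^k\to G$ is surjective; (ii) $w$ is $F_k(G)$-automorphic to a primitive word; (iii) $w$ is identically distributed on $G$ to a primitive word.
   Context: $F_k$ is the free group on $x_1,\dots,x_k$; a word is primitive if it belongs to some free basis of $F_k$ (equivalently, it is the image of $x_1$ under an automorphism of $F_k$). $P_{w,G}(g):=|\{(g_1,\dots,g_k)\in G^k: w(g_1,\dots,g_k)=g\}|/|G|^k$; two words (possibly in different numbers of variables) are identically distributed on $G$ if their functions $P_{\cdot,G}$ coincide on $G$. The group $F_k(G)$ consists of the word maps $G^k\to G$ induced by elements of $F_k$, under pointwise multiplication; $w_1,w_2\in F_k$ are $F_k(G)$-automorphic if some group automorphism of $F_k(G)$ sends the word map of $w_1$ to that of $w_2$. *)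

(* Defs.v *)
From HB Require Import structures.
From mathcomp Require Import all_boot all_order all_algebra all_fingroup all_solvable.
Set Implicit Arguments. Unset Strict Implicit. Unset Printing Implicit Defensive.

(* Free group F_k modelled by words over letters (i, b) :
   x_i if b = false, x_i^-1 if b = true; two words denote the same element of
   F_k iff their free reductions coincide. *)

Definition letter (k : nat) := ('I_k * bool)%type.
Definition word (k : nat) := seq (letter k).

Definition inv_letter k (a : letter k) : letter k := (a.1, ~~ a.2).
Definition inv_word k (u : word k) : word k := rev (map (@inv_letter k) u).

Fixpoint reduce k (u : word k) : word k :=
  match u with
  | [::] => [::]
  | a :: s =>
      match reduce s with
      | b :: r => if b == inv_letter a then r else a :: b :: r
      | [::] => [:: a]
      end
  end.

Definition feq k (u v : word k) : Prop := reduce u = reduce v.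

Definition gen k (i : 'I_k) : word k := [:: (i, false)].

Definition subst k m (phi : 'I_k -> word m) (w : word k) : word m :=
  flatten (map (fun a : letter k => if a.2 then inv_word (phi a.1) else phi a.1) w).

Definition is_aut k (phi psi : {ffun 'I_k -> word k}) : Prop :=
  (forall i, feq (subst phi (psi i)) (gen i)) /\
  (forall i, feq (subst psi (phi i)) (gen i)).

Definition primitive_word k (w : word k) : Prop :=
  exists (phi psi : {ffun 'I_k -> word k}), is_aut phi psi /\
    exists i : 'I_k, nat_of_ord i = 0%N /\ feq (phi i) w.

Section WordMaps.
Variable gT : finGroupType.
Local Open Scope group_scope.

Definition weval k (x : {ffun 'I_k -> gT}) (w : word k) : gT :=
  foldr (fun a acc => (if a.2 then (x a.1)^-1 else x a.1) * acc) 1 w.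

Definition wmap_type k := {ffun {ffun 'I_k -> gT} -> gT}.

Definition wmap k (w : word k) : wmap_type k := [ffun x => weval x w].

Definition fmul k (f g : wmap_type k) : wmap_type k := [ffun x => f x * g x].

Definition in_FkG k (f : wmap_type k) : Prop := exists u : word k, f = wmap u.

Definition FkG_aut k (alpha : wmap_type k -> wmap_type k) : Prop :=
  [/\ forall f, in_FkG f -> in_FkG (alpha f),
      forall f g, in_FkG f -> in_FkG g -> alpha (fmul f g) = fmul (alpha f) (alpha g),
      forall f g, in_FkG f -> in_FkG g -> alpha f = alpha g -> f = g
    & forall g, in_FkG g -> exists2 f, in_FkG f & alpha f = g].

Definition FkG_automorphic k (w1 w2 : word k) : Prop :=
  exists alpha, FkG_aut alpha /\ alpha (wmap w1) = wmap w2.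

Definition word_surj k (w : word k) : Prop :=
  forall g : gT, exists x : {ffun 'I_k -> gT}, weval x w = g.

Definition Pw k (w : word k) (g : gT) : rat :=
  ((#|[set x : {ffun 'I_k -> gT} | weval x w == g]|)%:R / (#|gT| ^ k)%:R)%R.

Definition ident_distr k m (w : word k) (v : word m) : Prop :=
  forall g : gT, Pw w g = Pw v g.

End WordMaps.

(* Main.v *)
From HB Require Import structures.
Require Import Defs.
From mathcomp Require Import all_boot all_order all_algebra all_fingroup all_solvable.
From Stdlib Require Import Classical.

Set Implicit Arguments. Unset Strict Implicit. Unset Printing Implicit Defensive.

Definition tt n s := n`_[pred q | ~~ (q %| s)].
Fixpoint SS n (c : nat -> nat) m := if m is m'.+1 then SS n c m' + tt n (SS n c m') * c m' else 0.

Section NT.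
Variable n : nat.
Hypothesis n_gt0 : 0 < n.

Lemma tt0 : tt n 0 = 1.
Proof.
rewrite /tt; apply: part_p'nat; rewrite /pnat n_gt0 /=; apply/allP=> q _.
by rewrite !inE dvdn0.
Qed.

Lemma tt_dvd s p : prime p -> p %| n -> (p %| tt n s) = ~~ (p %| s).
Proof.
move=> pp pn; have := pi_of_part [pred q | ~~ (q %| s)] n_gt0 p.
rewrite !inE /= !mem_primes pp n_gt0 pn part_gt0 /=.
by [].
Qed.

Variable c : nat -> nat.

Lemma SS_inv m p : prime p -> p %| n ->
  (p %| SS n c m) = [forall j : 'I_m, p %| c j].
Proof.
move=> pp pn; elim: m => [|m IH] /=.
  by rewrite dvdn0; apply/esym/forallP=> -[].
case: (boolP (p %| SS n c m)) => h.
  rewrite dvdn_addr // Euclid_dvdM // tt_dvd // h /=; move: h; rewrite IH => /forallP h.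
  apply/idP/forallP => [hc j|/(_ ord_max) //].
  case: (ltngtP j m) => [jm|mj|jm].
  - by have := h (Ordinal jm).
  - by have := ltn_ord j; rewrite ltnS leqNgt mj.
  - by have -> : j = ord_max by apply/val_inj; rewrite /= jm.
rewrite /= dvdn_addl; last by apply: dvdn_mulr; rewrite tt_dvd.
rewrite (negbTE h); apply/esym/negP=> /forallP hall.
move: h; rewrite IH; apply/negP/negPn/forallP=> j.
by have := hall (widen_ord (leqnSn m) j).
Qed.

End NT.


Section Basic.
Variable gT : finGroupType.
Local Open Scope group_scope.
Definition lv k (x : {ffun 'I_k -> gT}) (a : letter k) : gT := if a.2 then (x a.1)^-1 else x a.1.

Lemma weval_cons k (x : {ffun 'I_k -> gT}) (a : letter k) (u : word k) : weval x (a :: u) = lv x a * weval x u.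
Proof. by []. Qed.

Lemma weval_cat k (x : {ffun 'I_k -> gT}) (u : word k) (v : word k) : weval x (u ++ v) = weval x u * weval x v.
Proof. by elim: u => [|a u IH] /=; rewrite ?mul1g // IH mulgA. Qed.

Lemma lv_inv k (x : {ffun 'I_k -> gT}) (a : letter k) : lv x (inv_letter a) = (lv x a)^-1.
Proof. by rewrite /lv /inv_letter /=; case: a.2 => //=; rewrite invgK. Qed.

Lemma weval_inv k (x : {ffun 'I_k -> gT}) (u : word k) : weval x (inv_word u) = (weval x u)^-1.
Proof.
elim: u => [|a u IH]; first by rewrite invg1.
rewrite /inv_word /= rev_cons -cats1 weval_cat -/(inv_word u) IH /=.
by rewrite mulg1 -/(lv x (inv_letter a)) lv_inv -invMg.
Qed.

Lemma weval_reduce k (x : {ffun 'I_k -> gT}) (u : word k) : weval x (reduce u) = weval x u.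
Proof.
elim: u => [|a s IH] //=; move: IH; case: (reduce s) => [|b r] IH.
  by rewrite -IH.
case: eqP => [eb|_]; last by rewrite -IH.
rewrite -IH /= -/(lv x a) -/(lv x b) -/(weval x r) eb lv_inv.
by rewrite mulgA mulgV mul1g.
Qed.

Lemma feq_weval k (x : {ffun 'I_k -> gT}) (u : word k) (v : word k) : feq u v -> weval x u = weval x v.
Proof. by rewrite /feq => e; rewrite -weval_reduce e weval_reduce. Qed.

Lemma weval_subst k m (phi : 'I_k -> word m) (x : {ffun 'I_m -> gT}) u :
  weval x (subst phi u) = weval [ffun i => weval x (phi i)] u.
Proof.
elim: u => [|a u IH] //.
have -> : subst phi (a :: u) = (if a.2 then inv_word (phi a.1) else phi a.1) ++ subst phi u by [].
rewrite weval_cat IH weval_cons /lv ffunE.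
by case: a.2; rewrite ?weval_inv.
Qed.

Lemma weval_gen k (x : {ffun 'I_k -> gT}) (i : 'I_k) : weval x (gen i) = x i.
Proof. by rewrite /= mulg1. Qed.

End Basic.

Section Prim.
Variable gT : finGroupType.
Local Open Scope group_scope.

Lemma prim_surj k (v : word k) : primitive_word v -> word_surj gT v.
Proof.
move=> [phi [psi [[_ H2] [i0 [_ e]]]]] g.
pose y : {ffun 'I_k -> gT} := [ffun j => if j == i0 then g else 1].
exists [ffun j => weval y (psi j)].
rewrite -(feq_weval _ e) -weval_subst (feq_weval _ (H2 i0)) weval_gen.
by rewrite /y ffunE eqxx.
Qed.

Lemma Pw_gt0 k (v : word k) g : (exists x, weval x v = g) -> (0 < Pw v (g : gT))%R.
Proof.
case=> x ex; rewrite /Pw Num.Theory.divr_gt0 // ?Num.Theory.ltr0n //.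
  by apply/card_gt0P; exists x; rewrite inE ex.
by rewrite expn_gt0; apply/orP; left; apply/card_gt0P; exists 1.
Qed.

Lemma Pw_eq0 k (w : word k) g : ~ (exists x, weval x w = g) -> Pw w (g : gT) = 0%R.
Proof.
move=> nx; rewrite /Pw.
suff -> : #|[set x : {ffun 'I_k -> gT} | weval x w == g]| = 0 by rewrite GRing.mul0r.
apply/eqP; rewrite cards_eq0; apply/eqP/setP=> x; rewrite !inE.
by apply/negP=> /eqP ex; apply: nx; exists x.
Qed.

Lemma iii_i k (w : word k) :
  (exists (m : nat) (v : word m), primitive_word v /\ ident_distr gT w v) ->
  word_surj gT w.
Proof.
move=> [m [v [pv id]]] g; apply: NNPP => nx.
have := Pw_gt0 (prim_surj pv g); rewrite -id Pw_eq0 //.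

Qed.

End Prim.

Section PhiGood.
Variable gT : finGroupType.
Local Open Scope group_scope.
Variable k : nat.
Variable theta : 'I_k -> word k.
Definition Phi (x : {ffun 'I_k -> gT}) : {ffun 'I_k -> gT} := [ffun i => weval x (theta i)].
Hypothesis Phi_inj : injective Phi.
Let pi : {perm {ffun 'I_k -> gT}} := perm Phi_inj.

Lemma pi_iter m : exists eta : 'I_k -> word k,
  forall x, (pi ^+ m) x = [ffun i => weval x (eta i)].
Proof.
elim: m => [|m [eta IH]].
  exists (@gen k) => x; rewrite expg0 perm1; apply/ffunP=> i.
  by rewrite ffunE weval_gen.
exists (fun i => subst eta (theta i)) => x.
rewrite expgSr permM IH permE; apply/ffunP=> i; rewrite !ffunE.
by rewrite weval_subst.
Qed.

Lemma pi_inv : exists eta : 'I_k -> word k,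
  forall x, pi^-1 x = [ffun i => weval x (eta i)].
Proof. by rewrite invg_expg; apply: pi_iter. Qed.

Lemma Phi_ii_iii (w : word k) (i0 : 'I_k) : nat_of_ord i0 = 0 ->
  (forall x : {ffun 'I_k -> gT}, weval x (theta i0) = weval x w) ->
  (exists v : word k, primitive_word v /\ FkG_automorphic gT w v) /\
  (exists m (v : word m), primitive_word v /\ ident_distr gT w v).
Proof.
move=> i00 ew.
have pg : primitive_word (gen i0).
  exists [ffun i => gen i], [ffun i => gen i]; split; last first.
    by exists i0; split => //; rewrite ffunE.
  by split=> i; rewrite /feq ffunE /subst /= ffunE cats0.
have piE y : pi y = Phi y by rewrite permE.
split.
  exists (gen i0); split => //.
  have [eta etaE] := pi_inv.
  exists (fun f : wmap_type gT k => [ffun x => f (pi^-1 x)]); split.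
    split.
    - move=> f [u ->]; exists (subst eta u); apply/ffunP=> x.
      by rewrite !ffunE weval_subst etaE.
    - by move=> f g _ _; apply/ffunP=> x; rewrite !ffunE.
    - move=> f g _ _ e; apply/ffunP=> x.
      have := congr1 (fun h : wmap_type gT k => h (pi x)) e.
      by rewrite !ffunE permK.
    - move=> g [u ->]; exists (wmap gT (subst theta u)); first by exists (subst theta u).
      apply/ffunP=> x; rewrite !ffunE weval_subst.
      by rewrite -/(Phi (pi^-1 x)) -piE permKV.
  apply/ffunP=> x; rewrite !ffunE weval_gen -ew.
  by rewrite -[weval _ _](ffunE (fun i => weval (pi^-1 x) (theta i))) -/(Phi _) -piE permKV.
exists k, (gen i0); split => // g; rewrite /Pw; congr (_ / _)%R; congr (_%:R)%R.
rewrite -(card_preimset [set x | weval x (gen i0) == g] (@perm_inj _ pi)).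
apply: eq_card => x.
by rewrite !inE weval_gen piE ffunE ew.
Qed.

End PhiGood.

Section Class2.
Variable gT : finGroupType.
Local Open Scope group_scope.
Hypothesis hc : forall a b c : gT, commute [~ a, b] c.
Local Notation n := #|gT|.

Lemma n_gt0 : 0 < n. Proof. by apply/card_gt0P; exists 1. Qed.

Lemma expg_n (g : gT) : g ^+ n = 1.
Proof. by rewrite -cardsT expg_cardG ?inE. Qed.

Lemma invg_n (g : gT) : g^-1 = g ^+ n.-1.
Proof.
have e : n = n.-1.+1 := esym (prednK n_gt0).
by rewrite -[LHS]mulg1 -(expg_n g) {1}e expgS mulKg.
Qed.

Lemma cfix (x a b : gT) : x ^ [~ a, b] = x.
Proof. by apply/conjg_fixP/commgP; apply/esym/hc. Qed.

Lemma key (a g : gT) m (z c : gT) :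
  a * (g ^+ m * [~ g, z] * c) = g ^+ m * [~ g, (a^-1) ^+ m * z] * (a * c).
Proof.
have e1 : [~ g, (a^-1) ^+ m * z] = [~ g, z] * [~ a, g ^+ m].
  rewrite commgMJ; congr (_ * _).
  have cf : forall v : gT, [~ g, v] ^ z = [~ g, v].
    by move=> v; apply/conjg_fixP/commgP/hc.
  rewrite cf.
  rewrite commgX; last by apply/esym/hc.
  rewrite commgX; last by apply/esym/hc.
  rewrite commgV; last by apply/esym/hc.
  by rewrite invg_comm.
rewrite e1; set e := [~ a, g ^+ m]; set d := [~ g, z].
have ag : a * g ^+ m = g ^+ m * a * e by rewrite /e -commgC.
have he x : e * x = x * e := hc _ _ x.
have hd x : d * x = x * d := hc _ _ x.
clearbody e d.
rewrite (mulgA a) (mulgA a) ag -!mulgA; congr (_ * _).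
rewrite !mulgA -(he a) -(mulgA e a d) -(hd a) (mulgA e d a) (he d).
by [].
Qed.

Variable k : nat.

Definition Eexp (T : 'I_k -> nat) (w : word k) : nat :=
  foldr (fun (a : letter k) e => ((if a.2 then n.-1 * T a.1 else T a.1) + e)%N) 0 w.

Lemma class2_form (T : 'I_k -> nat) (b : {ffun 'I_k -> gT}) (w : word k) :
  exists z c, forall g,
    weval [ffun i => b i * g ^+ T i] w = g ^+ Eexp T w * [~ g, z] * c.
Proof.
elim: w => [|[i bo] w [z [c IH]]].
  by exists 1, 1 => g; rewrite commg1 !mulg1.
have rA (X A B C : gT) : X * (A * B * C) = X * A * B * C by rewrite !mulgA.
have rB (a X A B C : gT) : (a * X) * (A * B * C) = a * (X * A * B * C).
  by rewrite !mulgA.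
case: bo.
  exists ((b i)^-1^-1 ^+ Eexp T w * z), ((b i)^-1 * c) => g.
  rewrite weval_cons /lv /= ffunE IH invMg -(mulgA (g ^+ T i)^-1) key rA.
  by rewrite -expgVn (invg_n g) -expgM -expgD.
exists ((b i)^-1 ^+ (T i + Eexp T w) * z), (b i * c) => g.
rewrite weval_cons /lv /= ffunE IH rB -expgD key.
by [].
Qed.

Lemma class2_inj E z c : coprime E n ->
  injective (fun g : gT => g ^+ E * [~ g, z] * c).
Proof.
move=> co g1 g2 /= /mulIg e.
have cz g : [~ g ^+ E * [~ g, z], z] = [~ g, z] ^+ E.
  rewrite commMgJ cfix commXg; last by apply/esym/hc.
  have /commgP/eqP -> : commute [~ g, z] z by apply: hc.
  by rewrite mulg1.
have co' : coprime #|[set: gT]| E by rewrite cardsT coprime_sym.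
have inj := can_in_inj (expgK co').
have ed : [~ g1, z] = [~ g2, z].
  by apply: inj; rewrite ?inE //= -!cz e.
rewrite ed in e; move/mulIg: e => e2.
by apply: inj; rewrite ?inE.
Qed.

End Class2.

From mathcomp Require Import zify.

Definition cN k n (i : nat) (w : word k) : nat :=
  count (fun a : letter k => (nat_of_ord a.1 == i) && ~~ a.2) w +
  n.-1 * count (fun a : letter k => (nat_of_ord a.1 == i) && a.2) w.

Lemma cN_cons k n i (a : letter k) w :
  cN n i (a :: w) = cN n i w + (nat_of_ord a.1 == i) * (if a.2 then n.-1 else 1).
Proof.
rewrite /cN /=; case: (nat_of_ord a.1 == i); case: a.2 => /=; lia.
Qed.

Lemma SS_sum n c m : SS n c m = \sum_(j < m) tt n (SS n c j) * c j.
Proof. by elim: m => [|m IH]; rewrite ?big_ord0 // big_ord_recr /= IH. Qed.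

Lemma sum_cN_cons k n (T : 'I_k -> nat) (a : letter k) w :
  \sum_(i < k) T i * cN n i (a :: w) =
  (if a.2 then n.-1 * T a.1 else T a.1) + \sum_(i < k) T i * cN n i w.
Proof.
under eq_bigr => i _ do rewrite cN_cons mulnDr.
rewrite big_split /= addnC; congr (_ + _).
rewrite (bigD1 a.1) //= eqxx mul1n big1 ?addn0; last first.
  move=> i /negbTE ne; suff -> : (nat_of_ord a.1 == i) = false by rewrite mul0n muln0.
  by apply/negbTE; apply: contraFN ne => /eqP e; apply/eqP/val_inj.
by case: a.2; rewrite ?muln1 // mulnC.
Qed.

Section Constr.
Variable gT : finGroupType.
Local Open Scope group_scope.
Hypothesis hc : forall a b c : gT, commute [~ a, b] c.
Local Notation n := #|gT|.
Variable k : nat.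

Lemma Eexp_sum (T : 'I_k -> nat) (w : word k) :
  Eexp gT T w = (\sum_(i < k) T i * cN n i w)%N.
Proof.
elim: w => [|a w IH].
  symmetry; apply: big1 => i _; rewrite /cN /=; lia.
by rewrite (@sum_cN_cons k #|gT| T a w) -IH.
Qed.

Lemma weval_nseq (x : {ffun 'I_k -> gT}) i m :
  weval x (nseq m (i, true)) = (x i)^-1 ^+ m.
Proof. by elim: m => [|m IH] //=; rewrite IH expgS. Qed.

Lemma C_Phi (w : word k) :
  (forall p, prime p -> p %| n -> exists i : 'I_k, ~~ (p %| cN n i w)) ->
  1 < n ->
  exists theta (i0 : 'I_k), nat_of_ord i0 = 0 /\ injective (@Phi gT k theta) /\
    (forall x : {ffun 'I_k -> gT}, weval x (theta i0) = weval x w).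
Proof.
move=> C n1.
have [i1 _] := C _ (pdiv_prime n1) (pdiv_dvd n).
have k0 : 0 < k by case: k i1 => // -[].
pose i0 : 'I_k := Ordinal k0.
pose c := fun j => cN n j w.
pose T := fun i : 'I_k => tt n (SS n c i).
have T0 : T i0 = 1%N by rewrite /T /= tt0 ?n_gt0.
have co : coprime (Eexp gT T w) n.
  rewrite Eexp_sum.
  have -> : (\sum_(i < k) T i * cN n i w)%N = SS n c k.
    by rewrite SS_sum.
  rewrite /coprime; apply: contraT => ne.
  have g1 : 1 < gcdn (SS n c k) n.
    by rewrite ltn_neqAle eq_sym ne gcdn_gt0 (n_gt0 gT) orbT.
  pose q := pdiv (gcdn (SS n c k) n).
  have qp : prime q := pdiv_prime g1.
  have qg : q %| gcdn (SS n c k) n := pdiv_dvd _.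
  have [i ni] := C q qp (dvdn_trans qg (dvdn_gcdr _ _)).
  have := dvdn_trans qg (dvdn_gcdl _ _).
  rewrite (SS_inv (n_gt0 gT)) // ?(dvdn_trans qg (dvdn_gcdr _ _)) //.
  by move=> /forallP /(_ i); rewrite (negbTE ni).
pose theta := fun i : 'I_k => if i == i0 then w else gen i ++ nseq (T i) (i0, true).
exists theta, i0; split => //; split; last by move=> x; rewrite /theta eqxx.
pose bb := fun x : {ffun 'I_k -> gT} =>
  [ffun i => if i == i0 then 1 else x i * (x i0)^-1 ^+ T i].
have rep x : x = [ffun i => bb x i * (x i0) ^+ T i].
  apply/ffunP=> i; rewrite !ffunE.
  case: eqP => [->|_]; first by rewrite T0 mul1g expg1.
  by rewrite expgVn mulgKV.
have bbPhi x : bb x = [ffun i => if i == i0 then 1 else @Phi gT k theta x i].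
  apply/ffunP=> i; rewrite !ffunE /theta.
  by case: eqP => // _; rewrite weval_cat weval_gen weval_nseq.
move=> x1 x2 e.
have eb : bb x1 = bb x2 by rewrite !bbPhi e.
have ew : weval x1 w = weval x2 w.
  have := congr1 (fun y : {ffun 'I_k -> gT} => y i0) e; rewrite !ffunE /theta eqxx.
  by [].
have [z [cc fz]] := class2_form hc T (bb x2) w.
have g12 : x1 i0 = x2 i0.
  apply: (class2_inj hc co (z := z) (c := cc)); rewrite /= -!fz.
  by rewrite -{1}eb -(rep x1) -(rep x2).
by rewrite (rep x1) (rep x2) eb g12.
Qed.

End Constr.


Section HexS.
Local Open Scope group_scope.
Lemma Hex (gT : finGroupType) p : nilpotent [set: gT] -> prime p -> p %| #|gT| ->
  exists H : {group gT}, [/\ (H : {set gT}) != [set: gT], [set: gT]^`(1) \subset H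
     & forall g : gT, g ^+ p \in H].
Proof.
move=> nilG pp pG.
set G := [set: gT].
pose Q := 'O_p^'(G).
have nQ : Q <| G := pcore_normal _ _.
have NQ : G \subset 'N(Q) := normal_norm nQ.
have hallQ := nilpotent_pcore_Hall p^' nilG.
have [sQG p'Q iQ] := and3P hallQ.
have pGb : p.-group (G / Q) by rewrite /pgroup card_quotient // -pnatNK.
have ntGb : G / Q != 1.
  apply/negP=> /eqP e1.
  have : #|G : Q| = 1%N by rewrite -card_quotient // e1 cards1.
  move=> i1; move: (Lagrange sQG); rewrite i1 muln1 cardsT => eQ.
  by move: p'Q; rewrite /pgroup eQ p'natE // pG.
pose M := 'Phi(G / Q).
exists (coset Q @*^-1 M)%G; split.
- apply/negP=> /eqP eH.
  have : G / Q \subset M.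
    apply/subsetP=> y /morphimP [g Ng _ ->].
    have : g \in coset Q @*^-1 M by rewrite eH inE.
    by case/morphpreP.
  by move=> sub; have := Phi_proper ntGb; rewrite /proper (Phi_sub _) sub.
- apply/subsetP=> x xd; apply/morphpreP; split; first by apply: (subsetP NQ); rewrite inE.
  have : coset Q x \in (G / Q)^`(1).
    by rewrite -morphim_der // mem_morphim // (subsetP NQ) ?inE.
  have sD : (G / Q)^`(1) \subset M by rewrite /M (Phi_joing pGb) joing_subl.
  by move=> h; exact: (subsetP sD _ h).
- move=> g; apply/morphpreP; split; first by rewrite (subsetP NQ) ?inE.
  rewrite morphX ?(subsetP NQ) ?inE //.
  set y := coset Q g.
  have yG : y \in G / Q by rewrite mem_morphim ?(subsetP NQ) ?inE.
  have [_ ep] := abelemP pp (Phi_quotient_abelem pGb).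
  have nPhi : y \in 'N(M) := subsetP (normal_norm (Phi_normal _)) y yG.
  apply: coset_idr; first by rewrite groupX.
  by rewrite morphX // ep // mem_quotient.
Qed.

End HexS.

Section FG.
Variable gT : finGroupType.
Variable k : nat.
Local Open Scope group_scope.

Definition Gam : Type := {ffun {ffun 'I_k -> gT} -> gT}.
HB.instance Definition _ := Finite.on Gam.

Definition gam_one : Gam := [ffun => 1].
Definition gam_inv (f : Gam) : Gam := [ffun x => (f x)^-1].
Definition gam_mul (f g : Gam) : Gam := @fmul gT k f g.

Lemma gam_mulA : associative gam_mul.
Proof. by move=> f g h; apply/ffunP=> x; rewrite !ffunE mulgA. Qed.
Lemma gam_mul1 : left_id gam_one gam_mul.
Proof. by move=> f; apply/ffunP=> x; rewrite !ffunE mul1g. Qed.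
Lemma gam_mulV : left_inverse gam_one gam_inv gam_mul.
Proof. by move=> f; apply/ffunP=> x; rewrite !ffunE mulVg. Qed.

HB.instance Definition _ := Finite_isGroup.Build Gam gam_mulA gam_mul1 gam_mulV.

Lemma GmulE (f g : Gam) x : (f * g) x = f x * g x.
Proof. by rewrite /= /gam_mul /fmul ffunE. Qed.
Lemma GinvE (f : Gam) x : (f^-1) x = (f x)^-1.
Proof. by rewrite /= ffunE. Qed.
Lemma G1E x : (1 : Gam) x = 1.
Proof. by rewrite /= ffunE. Qed.

End FG.

Section AbLemma.
Variable A : finGroupType.
Local Open Scope group_scope.
Variable k : nat.
Variable N : nat.
Hypothesis N_gt0 : 0 < N.
Variable y : {ffun 'I_k -> A}.
Hypothesis yc : forall i j, commute (y i) (y j).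
Hypothesis yN : forall i, y i ^+ N = 1.

Lemma lv_comm a b : commute (lv y a) (y b).
Proof.
rewrite /lv; case: a.2 => /=; last exact: yc.
by apply/commute_sym/commuteV/commute_sym/yc.
Qed.

Lemma commuteMl (a b c : A) : commute a c -> commute b c -> commute (a * b) c.
Proof. by move=> h1 h2; apply/commute_sym/commuteM; apply/commute_sym. Qed.

Lemma weval_comm u b : commute (weval y u) (y b).
Proof.
elim: u => [|a u IH] /=; first exact: commute_sym (commute1 _).
by apply: commuteMl => //; apply: lv_comm.
Qed.

Lemma weval_comm_lv u a : commute (weval y u) (lv y a).
Proof.
rewrite /lv; case: a.2; last exact: weval_comm.
by apply/commuteV/weval_comm.
Qed.

Lemma weval_filter (P : pred (letter k)) u :
  weval y u = weval y (filter P u) * weval y (filter (predC P) u).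
Proof.
elim: u => [|a u IH]; first by rewrite /= mulg1.
rewrite weval_cons IH.
have -> : filter P (a :: u) = if P a then a :: filter P u else filter P u by [].
have -> : filter (predC P) (a :: u) =
   if P a then filter (predC P) u else a :: filter (predC P) u.
  by rewrite /=; case: (P a).
case: (P a); rewrite !weval_cons; first by rewrite mulgA.
rewrite !mulgA; congr (_ * _).
exact/commute_sym/weval_comm_lv.
Qed.

Lemma invN (g : A) : g ^+ N = 1 -> g^-1 = g ^+ N.-1.
Proof.
move=> gN; have e : N = N.-1.+1 := esym (prednK N_gt0).
by rewrite -[LHS]mulg1 -gN {1}e expgS mulKg.
Qed.

Lemma weval_single (j : 'I_k) u : all (fun a : letter k => a.1 == j) u ->
  weval y u = y j ^+ cN N j u.
Proof.
elim: u => [|a u IH]; first by rewrite /cN /= muln0.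
move=> /= /andP[/eqP aj /IH]; rewrite -/(weval y u) => ->.
case: a aj => ai ab /= aj; subst ai.
rewrite cN_cons /= eqxx mul1n.
case: ab; last by rewrite addn1 expgS.
by rewrite (invN (yN j)) -expgD addnC.
Qed.

Lemma cN_filter (j : 'I_k) i u :
  cN N i (filter (fun a : letter k => a.1 == j) u) = if i == j then cN N i u else 0%N.
Proof.
elim: u => [|a u IH]; first by case: (i == j); rewrite /cN /= ?muln0.
have -> : filter (fun a : letter k => a.1 == j) (a :: u) =
  if a.1 == j then a :: filter (fun a : letter k => a.1 == j) u
  else filter (fun a : letter k => a.1 == j) u by [].
case: (boolP (i == j)) IH => [/eqP ij|nij] IH.
  rewrite ij in IH *.
  case Pa : (a.1 == j); rewrite !cN_cons ?IH //.
  have e : (nat_of_ord a.1 == nat_of_ord j) = false := Pa.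
  by rewrite e mul0n addn0.
case Pa : (a.1 == j); rewrite ?cN_cons IH //.
by move/eqP: Pa => ->; rewrite eq_sym (negbTE nij).
Qed.

Lemma cN_filterC (j : 'I_k) i u :
  cN N i (filter (predC (fun a : letter k => a.1 == j)) u) = if i == j then 0%N else cN N i u.
Proof.
elim: u => [|a u IH]; first by case: (i == j); rewrite /cN /= ?muln0.
have -> : filter (predC (fun a : letter k => a.1 == j)) (a :: u) =
  if a.1 == j then filter (predC (fun a : letter k => a.1 == j)) u
  else a :: filter (predC (fun a : letter k => a.1 == j)) u by rewrite /=; case: (a.1 == j).
case: (boolP (i == j)) IH => [/eqP ij|nij] IH.
  rewrite ij in IH *.
  by case Pa : (a.1 == j); rewrite ?cN_cons ?IH // val_eqE Pa.
case Pa : (a.1 == j); rewrite ?cN_cons IH //.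
by move/eqP: Pa => ->; rewrite eq_sym (negbTE nij) mul0n addn0.
Qed.

Lemma Ab_gen m : forall w, all (fun a : letter k => a.1 < m) w ->
    (forall i : 'I_k, y i ^+ cN N i w = 1) -> weval y w = 1.
Proof.
elim: m => [|m IH] w0 allw h.
  by case: w0 allw h => //=.
case: (ltnP m k) => mk; last first.
  apply: IH h; apply/allP=> a _; exact: leq_trans (ltn_ord a.1) mk.
pose j : 'I_k := Ordinal mk.
rewrite (weval_filter (fun a : letter k => a.1 == j)).
rewrite (@weval_single j) ?filter_all // cN_filter eqxx h mul1g.
apply: IH.
  apply/allP=> a; rewrite mem_filter => /andP[/= nj aw].
  have := allP allw a aw; rewrite ltnS leq_eqVlt => /orP[/eqP e|//].
  have aj : a.1 = j by apply/val_inj; rewrite /= e.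
  by rewrite /= aj eqxx in nj.
move=> i; rewrite cN_filterC; case: eqP => _; first by rewrite expg0.
exact: h.
Qed.

Lemma Ab w : (forall i : 'I_k, y i ^+ cN N i w = 1) -> weval y w = 1.
Proof. by apply: (Ab_gen (m := k)); apply/allP=> a _; apply: ltn_ord. Qed.

End AbLemma.

Lemma weval_mem (A : finGroupType) (H : {group A}) k (y : {ffun 'I_k -> A}) w :
  (forall i, y i \in H) -> weval y w \in H.
Proof.
move=> yH; elim: w => [|a w IH] /=; first exact: group1.
by rewrite groupM // -/(lv y a) /lv; case: a.2; rewrite ?groupV yH.
Qed.

Lemma morph_weval (A B : finGroupType) (D : {group A}) (f : {morphism D >-> B})
  k (y : {ffun 'I_k -> A}) w :
  (forall i, y i \in D) -> f (weval y w) = weval [ffun i => f (y i)] w.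
Proof.
move=> yD; elim: w => [|a w IH] /=; first exact: morph1.
rewrite -/(weval y w) -/(weval _ w) -IH morphM ?weval_mem //; last first.
  by rewrite -/(lv y a) /lv; case: a.2; rewrite ?groupV yD.
by rewrite ffunE; case: a.2; rewrite ?morphV.
Qed.

Section NotC.
Variable gT : finGroupType.
Local Open Scope group_scope.
Variable k : nat.
Local Notation Gm := (Gam gT k).

Definition Xg : {ffun 'I_k -> Gm} := [ffun i => (wmap gT (gen i) : Gm)].

Lemma wevalX w : (weval Xg w : Gm) = wmap gT w.
Proof.
apply/ffunP=> x; rewrite [RHS]ffunE; elim: w => [|a w IH]; first by rewrite G1E.
rewrite weval_cons GmulE IH weval_cons /lv; congr (_ * _).
by case: a.2; rewrite ?GinvE ffunE ffunE weval_gen.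
Qed.

Definition Fg : {group Gm} := <<[set Xg i | i : 'I_k]>>%G.

Lemma in_F (f : wmap_type gT k) : in_FkG f -> (f : Gm) \in Fg.
Proof.
move=> [u ->]; rewrite -wevalX; apply: weval_mem => i.
by apply: mem_gen; apply: imset_f.
Qed.

Lemma F_in (f : Gm) : f \in Fg -> in_FkG f.
Proof.
case/gen_prodgP=> m [c cA ->] {f}.
elim: m c cA => [|m IH] c cA.
  by exists [::]; rewrite big_ord0; apply/ffunP=> x; rewrite G1E.
rewrite big_ord_recr /=.
have [u eu] := IH (fun i => c (widen_ord (leqnSn m) i)) (fun i => cA _).
have /imsetP [j _ ej] := cA ord_max.
exists (u ++ gen j); apply/ffunP=> x.
rewrite GmulE ffunE weval_cat ej eu; congr (_ * _).
  by rewrite /wmap ffunE.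
by rewrite ffunE /wmap ffunE.
Qed.

Variable p : nat.
Definition Pp : {set Gm} := [set f ^+ p | f in Fg].
Definition Sg : {group Gm} := (Fg^`(1) <*> <<Pp>>)%G.

Lemma Pp_sub : Pp \subset Fg.
Proof. by apply/subsetP=> z /imsetP [f fF ->]; rewrite groupX. Qed.

Lemma Sg_sub : Sg \subset Fg.
Proof. by rewrite join_subG der_sub gen_subG Pp_sub. Qed.

Lemma Fg_norm : Fg \subset 'N(Sg).
Proof.
apply: normsY; first exact: normal_norm (der_normal 1 Fg).
apply: norms_gen; apply/subsetP=> x xF; rewrite inE; apply/subsetP=> z.
rewrite mem_conjg => /imsetP [f fF ez].
have -> : z = (f ^ x) ^+ p by rewrite -conjXg -ez conjgKV.
by apply: imset_f; rewrite groupJ.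
Qed.

Lemma wmap_S w : prime p -> p %| #|gT| -> (forall i : 'I_k, p %| cN #|gT| i w) ->
  (wmap gT w : Gm) \in Sg.
Proof.
move=> pp pn hw.
have XN i : Xg i \in 'N(Sg).
  by apply: (subsetP Fg_norm); apply: mem_gen; apply: imset_f.
have XF i : Xg i \in Fg by apply: mem_gen; apply: imset_f.
have ab : abelian (Fg / Sg) by apply: sub_der1_abelian; rewrite joing_subl.
pose y := [ffun i => coset Sg (Xg i)].
have yF i : y i \in Fg / Sg by rewrite ffunE mem_quotient.
have yp i : y i ^+ p = 1.
  rewrite ffunE -morphX //; apply: coset_id.
  by apply: (subsetP (joing_subr _ _)); apply: mem_gen; apply: imset_f.
have ydiv i m : p %| m -> y i ^+ m = 1.
  by move=> /dvdnP [q ->]; rewrite mulnC expgM yp expg1n.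
rewrite -wevalX; apply: coset_idr; first by apply: weval_mem.
rewrite morph_weval //.
have -> : [ffun i => coset Sg (Xg i)] = y by [].
apply: (@Ab _ k #|gT| (n_gt0 gT)) => //.
- by move=> i j; apply: (centsP ab) => //.
- by move=> i; apply: ydiv.
- by move=> i; apply: ydiv.
Qed.

Lemma alpha_S (alpha : wmap_type gT k -> wmap_type gT k) :
  FkG_aut alpha -> forall f : Gm, f \in Sg -> (alpha f : Gm) \in Sg.
Proof.
case=> a1 a2 a3 a4.
have fM : morphic Fg (alpha : Gm -> Gm).
  by apply/morphicP=> f g fF gF; apply: a2; apply: F_in.
pose phi := morphm_morphism fM.
have phiF : phi @* Fg \subset Fg.
  apply/subsetP=> z /morphimP [f _ fF ->]; rewrite /=.
  by apply: in_F; apply: a1; apply: F_in.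
have phiS : phi @* Sg \subset Sg.
  rewrite /= morphimY ?der_sub ?gen_subG ?Pp_sub // subUset; apply/andP; split.
    rewrite morphim_der // (subset_trans (dergS 1 phiF)) //.
    exact: joing_subl.
  rewrite morphim_gen ?Pp_sub // (subset_trans _ (joing_subr _ _)) // genS //.
  apply/subsetP=> z /morphimP [f _ /imsetP [g gF ->] ->].
  rewrite morphX //; apply: imset_f.
  by apply: (subsetP phiF); apply: mem_morphim.
move=> f fS; apply: (subsetP phiS).
have -> : (alpha f : Gm) = phi f by rewrite /= morphmE.
by apply: mem_morphim => //; apply: (subsetP Sg_sub).
Qed.

Lemma S_H (H : {group gT}) : [set: gT]^`(1) \subset H -> (forall g : gT, g ^+ p \in H) ->
  forall f : Gm, f \in Sg -> forall x, f x \in H.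
Proof.
move=> DH pH f fS x.
have eM : morphic [set: Gm] (fun f : Gm => f x).
  by apply/morphicP=> f1 f2 _ _; rewrite GmulE.
pose ev := morphm_morphism eM.
have evS : ev @* Sg \subset H.
  rewrite /= morphimY ?subsetT // join_subG; apply/andP; split.
    rewrite morphim_der ?subsetT // (subset_trans _ DH) //.
    by apply: dergS; apply: subsetT.
  rewrite morphim_gen ?subsetT // gen_subG.
  apply/subsetP=> z /morphimP [g _ /imsetP [h hF ->] ->].
  by rewrite morphX ?inE.
have -> : f x = ev f by rewrite /= morphmE.
by apply: (subsetP evS); apply: mem_morphim; rewrite ?inE.
Qed.

End NotC.

Section Main.
Variable gT : finGroupType.
Local Open Scope group_scope.

Lemma notC_H k (w : word k) :
  nilpotent [set: gT] ->
  ~ (forall p, prime p -> p %| #|gT| -> exists i : 'I_k, ~~ (p %| cN #|gT| i w)) ->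
  exists p (H : {group gT}),
    [/\ (H : {set gT}) != [set: gT], (wmap gT w : Gam gT k) \in @Sg gT k p,
        forall f : Gam gT k, f \in @Sg gT k p -> forall x, f x \in H
      & forall alpha, FkG_aut alpha -> forall f : Gam gT k, f \in @Sg gT k p -> (alpha f : Gam gT k) \in @Sg gT k p].
Proof.
move=> nilG nC.
have [p [pp [pn hw]]] : exists p, [/\ prime p, p %| #|gT| &
    forall i : 'I_k, p %| cN #|gT| i w].
  apply: NNPP => ne; apply: nC => p pp pn; apply: NNPP => ne2; apply: ne.
  exists p; split => // i; apply: NNPP => ni; apply: ne2; exists i; exact/negP.
have [H [HG DH pH]] := Hex nilG pp pn.
exists p, H; split => //.
- exact: wmap_S.
- exact: S_H.
- by move=> alpha aA; apply: alpha_S.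
Qed.

Lemma notall (H : {group gT}) : (H : {set gT}) != [set: gT] -> exists g, g \notin H.
Proof.
move=> HG; apply: NNPP => ne; move/negP: HG; apply; apply/eqP/setP=> g.
rewrite inE; apply: NNPP => /negP ng; apply: ne; by exists g.
Qed.

Lemma main_aux (k : nat) (w : word k) :
  nilpotent [set: gT] -> nil_class [set: gT] = 2 ->
  [<-> word_surj gT w;
       exists v : word k, primitive_word v /\ FkG_automorphic gT w v;
       exists (m : nat) (v : word m), primitive_word v /\ ident_distr gT w v].
Proof.
move=> nilG cl2.
have hc : forall a b c : gT, commute [~ a, b] c.
  have sub : ([set: gT]^`(1) \subset 'Z([set: gT]))%g by rewrite -nil_class2 cl2.
  move=> a b c.
  have /centerP [_ cz] : [~ a, b] \in 'Z([set: gT]).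
    by apply: (subsetP sub); rewrite derg1 mem_commg ?inE.
  by apply: cz; rewrite inE.
have n1 : 1 < #|gT|.
  rewrite -cardsT (cardG_gt1 [set: gT]%G); apply/negP=> /eqP e.
  by have := nil_class0 [set: gT]%G; rewrite cl2 e eqxx.
pose C := forall p, prime p -> p %| #|gT| -> exists i : 'I_k, ~~ (p %| cN #|gT| i w).
have CPhi : C -> (exists v : word k, primitive_word v /\ FkG_automorphic gT w v) /\
  (exists m (v : word m), primitive_word v /\ ident_distr gT w v).
  move=> hC; have [theta [i0 [i00 [inj e]]]] := C_Phi hc hC n1.
  exact: (Phi_ii_iii inj i00 e).
tfae.
- move=> surj; apply: (CPhi _).1; apply: NNPP => nC.
  have [p [H [HG wS SH _]]] := notC_H nilG nC.
  have [g ng] := notall HG.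
  have [x ex] := surj g; move: ng; rewrite -ex.
  have := SH _ wS x; rewrite /wmap ffunE => ->; by [].
- move=> [v [pv [alpha [aA ea]]]]; apply: (CPhi _).2; apply: NNPP => nC.
  have [p [H [HG wS SH aS]]] := notC_H nilG nC.
  have vS := aS _ aA _ wS; rewrite ea in vS.
  have [g ng] := notall HG.
  have [x ex] := @prim_surj gT _ v pv g; move: ng; rewrite -ex.
  have := SH _ vS x; rewrite /wmap ffunE => ->; by [].
- exact: iii_i.
Qed.

End Main.

Theorem corollary3p8 (gT : finGroupType) (k : nat) (w : word k) :
  nilpotent [set: gT] -> nil_class [set: gT] = 2 ->
  [<-> word_surj gT w;
       exists v : word k, primitive_word v /\ FkG_automorphic gT w v;
       exists (m : nat) (v : word m), primitive_word v /\ ident_distr gT w v].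
Proof. exact: main_aux. Qed.
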